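(* Every strong (i.e. strongly connected) tournament $T$ is $2^{*}$-weakly connected.
   Context: A tournament is a digraph in which each pair of distinct vertices is joined by exactly one arc; $x$ dominates $y$ if $xy$ is an arc. Paths are directed paths. For distinct vertices $u,v$ of a digraph $D$, a weak $k^{*}$-container between $u$ and $v$ is a set of $k$ internally disjoint paths, each of which is either a $(u,v)$-path or a $(v,u)$-path (different paths may have different directions), whose union contains every vertex of $D$. A strong $k^{*}$-container between $u$ and $v$ is a set of $k$ internally disjoint paths that are either all $(u,v)$-paths or all $(v,u)$-paths, whose union contains every vertex of $D$. $D$ is $k^{*}$-weakly (resp. $k^{*}$-strongly) connected if there is a weak (resp. strong) $k^{*}$-container between every two distinct vertices of $D$. *)

(* Defs.v *)
From mathcomp Require Import all_boot.
Set Implicit Arguments. Unset Strict Implicit. Unset Printing Implicit Defensive.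

Section Digraph.
Variable T : finType.

Definition tournament (e : rel T) : Prop :=
  (forall x, ~~ e x x) /\ (forall x y, x != y -> e x y != e y x).

Definition strong (e : rel T) : Prop := forall x y, connect e x y.

Definition dpath (e : rel T) (u v : T) (p : seq T) : bool :=
  match p with
  | [::] => false
  | x :: s => [&& x == u, last x s == v, path e x s & uniq (x :: s)]
  end.

(* Since both paths have endpoint set {u,v} and are duplicate-free, being
   internally disjoint means their only common vertices are u and v. *)
Definition weak2_container (e : rel T) (u v : T) (p1 p2 : seq T) : Prop :=
  [/\ dpath e u v p1 || dpath e v u p1,
      dpath e u v p2 || dpath e v u p2,
      p1 != p2,
      (forall x, x \in p1 -> x \in p2 -> (x == u) || (x == v)) &
      (forall x, (x \in p1) || (x \in p2))].

Definition weakly_2star_connected (e : rel T) : Prop :=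
  forall u v, u != v -> exists p1 p2, weak2_container e u v p1 p2.

End Digraph.

(* Main.v *)
Require Import Defs.
From mathcomp Require Import all_boot zify.
From Stdlib Require Import Lia.
Set Implicit Arguments. Unset Strict Implicit. Unset Printing Implicit Defensive.

Section Camion.
Variable T : finType.
Variable e : rel T.
Hypothesis tour : tournament e.

Lemma irr x : ~~ e x x. Proof. by case: tour. Qed.
Lemma neq_of a b : e a b -> a != b.
Proof. by move=> h; apply/eqP=> E; move: h; rewrite E (negbTE (irr b)). Qed.
Lemma asym a b : e a b -> ~~ e b a.
Proof. move=> h; have := (proj2 tour) a b (neq_of h); by rewrite h; case: (e b a). Qed.
Lemma tot a b : a != b -> ~~ e a b -> e b a.
Proof. move=> ne h; have := (proj2 tour) a b ne; by move: h; case: (e a b); case: (e b a). Qed.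

Definition good (c : seq T) := [&& 0 < size c, uniq c & (cycle e c || (size c == 1))].

Lemma good_rot n c : good c -> good (rot n c).
Proof. by rewrite /good rot_uniq rot_cycle size_rot. Qed.

Lemma good_path y s : good (y :: s) -> path e y s.
Proof.
case/and3P=> _ _ /orP[]; first by rewrite /= rcons_path; case/andP.
by case: s.
Qed.

Lemma find_pair x t : forall w, x \notin w :: t -> e x (last w t) ->
  has (fun z => e z x) (w :: t) ->
  exists p a b q, w :: t = p ++ a :: b :: q /\ e a x /\ e x b.
Proof.
elim: t => [|w1 t IH] w.
  by move=> _ /= h; rewrite orbF => h'; move: (asym h); rewrite h'.
move=> xwt /= hl /orP[hw|hr].
  have xr : x \notin w1 :: t by apply: contra xwt => h; rewrite in_cons h orbT.
  case hx: (e x w1).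
    by exists [::], w, w1, t.
  have hw1 : e w1 x.
    apply: tot; last by rewrite hx.
    by apply: contra xr => /eqP ->; rewrite mem_head.
  have [|p [a [b [q [E [h1 h2]]]]]] := IH w1 xr hl; first by rewrite /= hw1.
  by exists (w :: p), a, b, q; rewrite E.
have xr : x \notin w1 :: t by apply: contra xwt => h; rewrite in_cons h orbT.
have [p [a [b [q [E [h1 h2]]]]]] := IH w1 xr hl hr.
by exists (w :: p), a, b, q; rewrite E.
Qed.

Lemma rot_pair (b0 : T) s0 p a b q : b0 :: rcons s0 b0 = p ++ a :: b :: q ->
  exists n (s' : seq T), rot n (b0 :: s0) = b :: s' /\ last b s' = a.
Proof.
case/lastP: q => [|q z].
  have -> : p ++ [:: a; b] = rcons (rcons p a) b by rewrite -!cats1 -catA.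
  rewrite -rcons_cons => /rcons_inj [E1 E2].
  exists 0, s0; rewrite rot0 -E2; split => //.
  by rewrite -(last_cons b0) E1 last_rcons.
rewrite -rcons_cons -!rcons_cons -rcons_cat => /rcons_inj [E1 _].
exists (size (rcons p a)), (q ++ rcons p a).
rewrite E1 -cat_rcons rot_size_cat; split => //.
by rewrite last_cat last_rcons.
Qed.


Definition inn c x := has (fun z => e z x) c.
Definition out c x := has (fun z => e x z) c.

Lemma ins_ext c n b s' x : good c -> x \notin c -> rot n c = b :: s' ->
  e (last b s') x -> e x b -> good (x :: b :: s').
Proof.
move=> gc xc E h1 h2.
have g' : good (b :: s') by rewrite -E good_rot.
rewrite /good /= h2 rcons_path (good_path g') h1 andbT.
have xbs : x \notin b :: s' by rewrite -E mem_rot.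
by rewrite xbs /= ?andbT; case/and3P: g'.
Qed.

Lemma mixed_ext c x : good c -> x \notin c -> inn c x -> out c x ->
  exists c', [/\ good c', size c < size c' & {subset c <= c'}].
Proof.
move=> gc xc hi /hasP [b0 b0c hb0].
have [i s0 Er] := rot_to b0c.
have g0 : good (b0 :: s0) by rewrite -Er good_rot.
have cyc : cycle e (b0 :: s0).
  move: g0 => /and3P[_ _ /orP[//|]]; case: s0 Er => // Er _.
  move: hi => /hasP [z zc hz].
  have : z \in b0 :: [::] by rewrite -Er mem_rot.
  by rewrite inE => /eqP Ez; move: (asym hb0); rewrite -Ez hz.
have xn : x \notin b0 :: rcons s0 b0.
  have xc' : x \notin b0 :: s0 by rewrite -Er mem_rot.
  apply: contra xc'; rewrite in_cons mem_rcons; case/orP => // /eqP ->.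
  exact: mem_head.
have hl : e x (last b0 (rcons s0 b0)) by rewrite last_rcons.
have hh : has (fun z => e z x) (b0 :: rcons s0 b0).
  move: hi => /hasP [z zc hz]; apply/hasP; exists z => //.
  by rewrite in_cons mem_rcons -Er mem_rot zc orbT.
have [p [a [b [q [Ed [ha hb]]]]]] := find_pair xn hl hh.
have [n [s' [Er2 Hl]]] := rot_pair Ed.
have gc2 : good (rot n (rot i c)) by rewrite !good_rot.
exists (x :: b :: s'); split.
- apply: (@ins_ext (rot i c) n) => //; [by rewrite good_rot|by rewrite mem_rot|by rewrite Er|by rewrite Hl].
- by rewrite /= -[size c](size_rot i) Er -(size_rot n) Er2.
- by move=> z zc; rewrite in_cons -Er2 -Er !mem_rot zc orbT.
Qed.

Lemma OI_ext c a b : good c -> a \notin c -> b \notin c -> ~~ out c a ->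
  ~~ inn c b -> e a b ->
  exists c', [/\ good c', size c < size c' & {subset c <= c'}].
Proof.
move=> gc ac bc /hasPn oa /hasPn ib hab.
have Ha z : z \in c -> e z a.
  move=> zc; apply: tot; last exact: oa.
  by apply: contra ac => /eqP ->.
have Hb z : z \in c -> e b z.
  move=> zc; apply: tot; last exact: ib.
  by apply: contra bc => /eqP <-.
clear oa ib; case: c gc ac bc Ha Hb => [//|y s] gc ac bc Ha Hb.
exists [:: a, b, y & s]; split => //; last first.
  by move=> z zc; rewrite !in_cons -in_cons zc !orbT.
rewrite /good /= rcons_path hab (Hb y (mem_head _ _)) (good_path gc).
rewrite (Ha _ (mem_last y s)) /=.
rewrite in_cons negb_or (neq_of hab) /=.
by rewrite ac bc andbT; case/and3P: gc.
Qed.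

Lemma first_exit (A : pred T) x p : path e x p -> A x -> ~~ A (last x p) ->
  exists a b, [/\ A a, ~~ A b & e a b].
Proof.
elim: p x => [|y p IH] x /=; first by move=> _ ->.
move=> /andP[hxy hp] ax hl.
case ay: (A y); first exact: IH hp ay hl.
by exists x, y; rewrite ay.
Qed.

Hypothesis str : strong e.

Lemma ext c x0 : good c -> x0 \notin c ->
  exists c', [/\ good c', size c < size c' & {subset c <= c'}].
Proof.
move=> gc x0c.
have [y yc] : exists y, y \in c by case: c gc {x0c} => // y s _; exists y; rewrite mem_head.
case: (boolP [exists x, [&& x \notin c, inn c x & out c x]]).
  by case/existsP => x /and3P [xc hi ho]; apply: (mixed_ext gc xc).
rewrite negb_exists => /forallP nm.
have io x : x \notin c -> inn c x || out c x.
  move=> xc; case ey: (e y x); first by apply/orP; left; apply/hasP; exists y.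
  apply/orP; right; apply/hasP; exists y => //; apply: tot; last by rewrite ey.
  by apply: contra xc => /eqP <-.
have nm' x : x \notin c -> inn c x -> out c x -> False.
  by move=> xc hi ho; move: (nm x); rewrite xc hi ho.
case ox: (out c x0).
  have ix : ~~ inn c x0 by apply/negP => h; apply: (nm' x0).
  have [p hp Ep] := connectP (str y x0).
  pose A := [pred z | ~~ ((z \notin c) && ~~ inn c z)].
  have Ay : A y by rewrite /= yc.
  have Al : ~~ A (last y p) by rewrite /= -Ep x0c ix.
  have [a [b [Aa Ab hab]]] := @first_exit A y p hp Ay Al.
  move: Aa Ab; rewrite /= negbK negb_and negbK => Aa /andP[bc ib].
  have ac : a \notin c.
    apply/negP => ac; move/negP: ib; apply; apply/hasP; by exists a.
  have ia : inn c a by move: Aa; rewrite (negbTE ac) negbK.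
  have oa : ~~ out c a by apply/negP => h; apply: (nm' a).
  exact: (OI_ext gc ac bc oa ib hab).
have [p hp Ep] := connectP (str x0 y).
pose A := [pred z | (z \notin c) && ~~ out c z].
have Ax : A x0 by rewrite /= x0c ox.
have Al : ~~ A (last x0 p) by rewrite /= -Ep yc.
have [a [b [Aa Ab hab]]] := @first_exit A x0 p hp Ax Al.
move: Aa Ab; rewrite /= negb_and negbK => /andP[ac oa] Ab.
have bc : b \notin c.
  apply/negP => bc; move/negP: oa; apply; apply/hasP; by exists b.
have ob : out c b by move: Ab; rewrite (negbTE bc) /= negbK.
have ib : ~~ inn c b by apply/negP => h; apply: (nm' b).
exact: (OI_ext gc ac bc oa ib hab).
Qed.

Lemma ham_ind n c : #|T| - size c <= n -> good c ->
  exists c', good c' /\ forall x, x \in c'.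
Proof.
elim: n c => [|n IH] c hn gc;
  (case: (pickP (fun x => x \notin c)) => [x0 x0c|hall];
   last by exists c; split => // x; move: (hall x); rewrite /=; case: (x \in c)).
- have [c' [g' lt _]] := ext gc x0c.
  have : size c' <= #|T| by move: g' => /and3P [_ /card_uniqP <- _]; apply: max_card.
  move: hn lt; lia.
- have [c' [g' lt _]] := ext gc x0c.
  apply: (IH c') => //.
  have : size c' <= #|T| by move: g' => /and3P [_ /card_uniqP <- _]; apply: max_card.
  move: hn lt; lia.
Qed.

End Camion.


Theorem proposition2p6 (T : finType) (e : rel T) :
  tournament e -> strong e -> weakly_2star_connected e.
Proof.
move=> tour str u v uv.
have g1 : good e [:: u] by rewrite /good /= orbT.
have [c [gc allc]] := ham_ind tour str (leqnn _) g1.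
have [i s Er] := rot_to (allc u).
have : good e (u :: s) by rewrite -Er good_rot.
case/and3P => _ us /orP[cyc|]; last first.
  case: s Er us => // Er _ _; have := allc v; rewrite -(mem_rot i) Er inE.
  by move/eqP=> E; move: uv; rewrite E eqxx.
have vs : v \in s.
  have := allc v; rewrite -(mem_rot i) Er in_cons => /orP[/eqP E|//].
  by move: uv; rewrite E eqxx.
case/splitPr: vs Er us cyc => s1 s2 Er us cyc.
move: cyc; rewrite /cycle rcons_cat /= cat_path /= => /and3P [p1 ev p2].
exists (u :: rcons s1 v), (v :: rcons s2 u).
have U1 : uniq ((u :: rcons s1 v) ++ s2) by rewrite cat_cons cat_rcons.
have U2 : uniq ((v :: rcons s2 u) ++ s1).
  have E : (v :: rcons s2 u) ++ s1 = rot (size (u :: s1)) ((u :: s1) ++ v :: s2).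
    by rewrite rot_size_cat cat_cons cat_rcons.
  by rewrite E rot_uniq.
move: (U1); rewrite cat_uniq => /and3P [q1 q2 _].
move: (U2); rewrite cat_uniq => /and3P [q3 _ _].
have pe1 : dpath e u v (u :: rcons s1 v).
  by rewrite /dpath eqxx last_rcons eqxx rcons_path p1 ev q1.
have pe2 : dpath e v u (v :: rcons s2 u).
  by rewrite /dpath eqxx last_rcons eqxx p2 q3.
split.
- by rewrite pe1.
- by rewrite pe2 orbT.
- by apply/eqP => -[E _]; move: uv; rewrite E eqxx.
- move=> x x1; rewrite in_cons mem_rcons in_cons => /orP[->|/orP[->|x2]]; rewrite ?orbT //.
  by move/hasP: q2; case; exists x.
- move=> x; have := allc x; rewrite -(mem_rot i) Er.
  rewrite !in_cons !mem_rcons !in_cons mem_cat in_cons.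
  by case: (x == u); case: (x == v); case: (x \in s1); case: (x \in s2); rewrite ?orbT.
Qed.
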